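(* Consider, for parameters $p>0$ and $r>0$, the planar system $$\dot x = -x-y,\qquad \dot y = ry+px-x^2y ,$$ equivalently, after the linear change of coordinates $(x,-(x+y))\mapsto(x,y)$, $$\dot x = y,\qquad \dot y=(r-p)x+(r-1)y-x^2y-x^3 .$$ At the parameter value $(p,r)=(1,1)$ the Jacobian of the vector field at the equilibrium $(0,0)$ has a double-zero eigenvalue (and is not the zero matrix), so $(p,r)=(1,1)$ is a Bogdanov–Takens bifurcation point with $\mathbb{Z}_2$ symmetry, at which the pitchfork bifurcation line $r=p$, the supercritical Hopf line $\{r=1,\ p>1\}$ of $(0,0)$, and the subcritical Hopf line $\{p=1,\ r>1\}$ of the nontrivial equilibria meet.
   Context: This is the simplified symmetric two-dimensional Maasch–Saltzman model; the system is invariant under $(x,y)\mapsto(-x,-y)$. For $r>p$ it has the nontrivial equilibria $(\pm\sqrt{r-p},\mp\sqrt{r-p})$ in the original coordinates. *)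

(* Defs.v *)
From Stdlib Require Import Reals.
From Coquelicot Require Import Coquelicot.
Open Scope R_scope.

Definition vf (p r : R) (z : R * R) : R * R :=
  (- fst z - snd z, r * snd z + p * fst z - fst z ^ 2 * snd z).

Definition comp (i : nat) (F : R * R -> R * R) : R * R -> R :=
  fun z => match i with O => fst (F z) | _ => snd (F z) end.

Definition pd (j : nat) (g : R * R -> R) : R * R -> R :=
  fun z => match j with
           | O => Derive (fun t => g (t, snd z)) (fst z)
           | _ => Derive (fun t => g (fst z, t)) (snd z)
           end.

Definition jac (F : R * R -> R * R) (z : R * R) (i j : nat) : R := pd j (comp i F) z.

Definition equilibrium (F : R * R -> R * R) (z : R * R) : Prop := F z = (0, 0).

Definition ci (w : R) : C := (0, w).

Definition charpoly (F : R * R -> R * R) (z : R * R) (l : C) : C :=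
  ((RtoC (jac F z 0 0) - l) * (RtoC (jac F z 1 1) - l)
   - RtoC (jac F z 0 1 * jac F z 1 0))%C.

Definition is_eigenvalue F z (l : C) : Prop := charpoly F z l = RtoC 0.

Definition double_zero_eigenvalue F z : Prop := forall l : C, charpoly F z l = (l * l)%C.

Definition jac_nonzero F z : Prop :=
  exists i j : nat, (i <= 1)%nat /\ (j <= 1)%nat /\ jac F z i j <> 0.

Definition imag_pair F z (w : R) : Prop :=
  0 < w /\ forall l : C, charpoly F z l = ((l - ci w) * (l + ci w))%C.

(* ---------- first Lyapunov coefficient (Kuznetsov, Elements of Applied
   Bifurcation Theory, formula (3.20)) ---------- *)
Definition cvec := (C * C)%type.
Definition cv (u : cvec) (i : nat) : C := match i with O => fst u | _ => snd u end.
Definition sum2 (f : nat -> C) : C := (f 0%nat + f 1%nat)%C.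
Definition cconjv (u : cvec) : cvec := (Cconj (fst u), Cconj (snd u)).
Definition cscal (a : C) (u : cvec) : cvec := (a * fst u, a * snd u)%C.
Definition cdot (p q : cvec) : C := sum2 (fun i => Cconj (cv p i) * cv q i)%C.

Definition Aapp F z (u : cvec) : cvec :=
  (sum2 (fun j => RtoC (jac F z 0 j) * cv u j)%C,
   sum2 (fun j => RtoC (jac F z 1 j) * cv u j)%C).
Definition ATapp F z (u : cvec) : cvec :=
  (sum2 (fun j => RtoC (jac F z j 0) * cv u j)%C,
   sum2 (fun j => RtoC (jac F z j 1) * cv u j)%C).

Definition Bform F z (u v : cvec) : cvec :=
  let Bi i := sum2 (fun j => sum2 (fun k =>
                RtoC (pd k (pd j (comp i F)) z) * cv u j * cv v k))%C in
  (Bi 0%nat, Bi 1%nat).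
Definition Cform F z (u v w : cvec) : cvec :=
  let Ci i := sum2 (fun j => sum2 (fun k => sum2 (fun m =>
                RtoC (pd m (pd k (pd j (comp i F))) z) * cv u j * cv v k * cv w m)))%C in
  (Ci 0%nat, Ci 1%nat).

Definition csolve (m00 m01 m10 m11 : C) (w : cvec) : cvec :=
  let d := (m00 * m11 - m01 * m10)%C in
  ((m11 * fst w - m01 * snd w) / d, (m00 * snd w - m10 * fst w) / d)%C.
Definition Ainv F z (w : cvec) : cvec :=
  csolve (RtoC (jac F z 0 0)) (RtoC (jac F z 0 1))
         (RtoC (jac F z 1 0)) (RtoC (jac F z 1 1)) w.
Definition Rinv2 F z (om : R) (w : cvec) : cvec :=
  csolve (ci (2 * om) - RtoC (jac F z 0 0))%C (- RtoC (jac F z 0 1))%C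
         (- RtoC (jac F z 1 0))%C (ci (2 * om) - RtoC (jac F z 1 1))%C w.

Definition lyap1 F z (om : R) (q p : cvec) : R :=
  / (2 * om) *
  Re (cdot p (Cform F z q q (cconjv q))
      - RtoC 2 * cdot p (Bform F z q (Ainv F z (Bform F z q (cconjv q))))
      + cdot p (Bform F z (cconjv q) (Rinv2 F z om (Bform F z q q))))%C.

Definition hopf_eigvecs F z (om : R) (q p : cvec) : Prop :=
  Aapp F z q = cscal (ci om) q /\ ATapp F z p = cscal (ci (- om)) p /\ cdot p q = RtoC 1.

Definition hopf_supercritical F z : Prop :=
  exists om, imag_pair F z om /\
    forall q p, hopf_eigvecs F z om q p -> lyap1 F z om q p < 0.
Definition hopf_subcritical F z : Prop :=
  exists om, imag_pair F z om /\
    forall q p, hopf_eigvecs F z om q p -> 0 < lyap1 F z om q p.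

Definition trJ F z : R := jac F z 0 0 + jac F z 1 1.

(* Main.v *)
Require Import Defs.
From Stdlib Require Import Reals.
From Coquelicot Require Import Coquelicot.
From Stdlib Require Import Lra Lia Nsatz FunctionalExtensionality.
Open Scope R_scope.

Lemma pd_const j c : pd j (fun _ : R * R => c) = fun _ => 0.
Proof. apply functional_extensionality; intro z; destruct j; simpl; apply Derive_const. Qed.

Ltac dtac := apply functional_extensionality; intros [x y]; simpl;
  apply is_derive_unique; auto_derive; auto; ring.

Section S.
Variables p r : R.
Lemma d_c0_0 : pd 0 (Defs.comp 0 (vf p r)) = fun _ => -1. Proof. dtac. Qed.
Lemma d_c0_1 : pd 1 (Defs.comp 0 (vf p r)) = fun _ => -1. Proof. dtac. Qed.
Lemma d_c1_0 : pd 0 (Defs.comp 1 (vf p r)) = fun z => p - 2 * fst z * snd z. Proof. dtac. Qed.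
Lemma d_c1_1 : pd 1 (Defs.comp 1 (vf p r)) = fun z => r - fst z ^ 2. Proof. dtac. Qed.
Lemma d_c1_00 : pd 0 (fun z : R * R => p - 2 * fst z * snd z) = fun z => -2 * snd z. Proof. dtac. Qed.
Lemma d_c1_01 : pd 1 (fun z : R * R => p - 2 * fst z * snd z) = fun z => -2 * fst z. Proof. dtac. Qed.
Lemma d_c1_10 : pd 0 (fun z : R * R => r - fst z ^ 2) = fun z => -2 * fst z. Proof. dtac. Qed.
Lemma d_c1_11 : pd 1 (fun z : R * R => r - fst z ^ 2) = fun _ => 0. Proof. dtac. Qed.
End S.
Lemma d_y0 : pd 0 (fun z : R * R => -2 * snd z) = fun _ => 0. Proof. dtac. Qed.
Lemma d_y1 : pd 1 (fun z : R * R => -2 * snd z) = fun _ => -2. Proof. dtac. Qed.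
Lemma d_x0 : pd 0 (fun z : R * R => -2 * fst z) = fun _ => -2. Proof. dtac. Qed.
Lemma d_x1 : pd 1 (fun z : R * R => -2 * fst z) = fun _ => 0. Proof. dtac. Qed.

Ltac drw := repeat (rewrite ?d_c0_0, ?d_c0_1, ?d_c1_0, ?d_c1_1, ?d_c1_00, ?d_c1_01,
   ?d_c1_10, ?d_c1_11, ?d_y0, ?d_y1, ?d_x0, ?d_x1, ?pd_const).

Lemma jac00 p r z : jac (vf p r) z 0 0 = -1. Proof. unfold jac; drw; reflexivity. Qed.
Lemma jac01 p r z : jac (vf p r) z 0 1 = -1. Proof. unfold jac; drw; reflexivity. Qed.
Lemma jac10 p r z : jac (vf p r) z 1 0 = p - 2 * fst z * snd z. Proof. unfold jac; drw; reflexivity. Qed.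
Lemma jac11 p r z : jac (vf p r) z 1 1 = r - fst z ^ 2. Proof. unfold jac; drw; reflexivity. Qed.


Lemma csolve_eq m00 m01 m10 m11 w d : d <> 0 -> (m00*m11 - m01*m10)%C = RtoC d ->
  csolve m00 m01 m10 m11 w = ((m11*fst w - m01*snd w) * RtoC (/d), (m00*snd w - m10*fst w) * RtoC(/d))%C.
Proof.
  intros Hd H. unfold csolve. rewrite H. unfold Cdiv.
  replace (Cinv (RtoC d)) with (RtoC (/d)); [reflexivity|].
  unfold Cinv, RtoC; apply injective_projections; simpl; field; auto.
Qed.

Lemma RtoC_neg p : RtoC (IZR (Zneg p)) = (- RtoC (IZR (Zpos p)))%C.
Proof. rewrite <- RtoC_opp. reflexivity. Qed.

Lemma ci_2 w : ci (2 * w) = (2 * ci w)%C.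
Proof. unfold ci, RtoC, Cmult; apply injective_projections; simpl; ring. Qed.
Lemma ci_opp w : ci (- w) = (- ci w)%C.
Proof. unfold ci, Copp; apply injective_projections; simpl; ring. Qed.
Lemma conj_m w (Q : C) : Cconj (-(1 + ci w) * Q) = (-(1 - ci w) * Cconj Q)%C.
Proof. destruct Q. unfold ci, Copp, Cconj, Cmult, Cplus, Cminus, RtoC; apply injective_projections; simpl; ring. Qed.
Lemma ci_neq0 w : w <> 0 -> ci w <> 0%C.
Proof. intros Hw H. apply Hw. apply (f_equal snd) in H. exact H. Qed.

Lemma lemP (P0 P1 c j : C) : (-(1)*P0 + c*P1 = -j*P1)%C -> P0 = ((c + j)*P1)%C.
Proof. intro H. replace P0 with (-(-(1)*P0 + c*P1) + c*P1)%C by ring. rewrite H. ring. Qed.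

Lemma conj_p w (Q : C) : Cconj ((1 + ci w) * Q) = ((1 - ci w) * Cconj Q)%C.
Proof. destruct Q. unfold ci, Copp, Cconj, Cmult, Cplus, Cminus, RtoC; apply injective_projections; simpl; ring. Qed.
Ltac cnz := let HH := fresh in intro HH; apply (f_equal fst) in HH; simpl in HH; lra.

Ltac cpush := repeat (rewrite ?RtoC_plus, ?RtoC_minus, ?RtoC_mult, ?RtoC_opp, ?RtoC_neg in *).

Lemma final_sub (w : R) (Q P1 : C) : 0 < w -> (Cconj P1 * Q = / (- (2) * ci w))%C ->
  0 < / (2 * w) * Re (/ (- (2) * ci w) * (Q * Cconj Q) * (- (24) - 4 * ci w + 4 / 3 * (ci w * ci w)))%C.
Proof.
  intros Hw Hn.
  destruct Q as [x y].
  assert (Hq : 0 < x*x + y*y).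
  { destruct (Req_dec (x*x+y*y) 0) as [H0|H0]; [|nra].
    assert (x = 0) by nra. assert (y = 0) by nra. subst x y.
    exfalso. apply (f_equal snd) in Hn. unfold Cconj, Cmult, Cinv, ci, RtoC, Copp in Hn; simpl in Hn.
    field_simplify in Hn; [|nra]. apply (f_equal (fun t => t * w)) in Hn.
    field_simplify in Hn; lra. }
  replace (Re _) with (2 * (x*x+y*y)).
  - apply Rmult_lt_0_compat; [apply Rinv_0_lt_compat|]; lra.
  - unfold Cconj, Cmult, Cinv, ci, RtoC, Copp, Cplus, Cminus, Cdiv, Re; simpl. field. lra.
Qed.

Lemma lyap_sub (a w : R) : 0 < w -> w*w = 2*a*a -> forall q p,
  hopf_eigvecs (vf 1 (1+a^2)) (a,-a) w q p -> 0 < lyap1 (vf 1 (1+a^2)) (a,-a) w q p.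
Proof.
  intros Hw Hwa q p [H1 [H2 H3]].
  assert (Ha : a <> 0) by (intro; subst; nra).
  unfold lyap1, Ainv, Rinv2, Bform, Cform, sum2, cv in *.
  unfold hopf_eigvecs, Aapp, ATapp, cdot, sum2, cv in *.
  rewrite ?jac00, ?jac01, ?jac10, ?jac11 in *.
  rewrite (csolve_eq _ _ _ _ _ (2*a*a)).
  2:{ nra. }
  2:{ unfold Cminus, Cmult, Cplus, Copp, RtoC, ci; simpl. apply injective_projections; simpl; ring. }
  rewrite (csolve_eq _ _ _ _ _ (-6*a*a)).
  2:{ nra. }
  2:{ unfold Cminus, Cmult, Cplus, Copp, RtoC, ci; simpl. apply injective_projections; simpl. all: nra. }
  unfold jac in *. drw. simpl fst in *; simpl snd in *.
  rewrite (RtoC_inv (2*a*a)) by nra. rewrite (RtoC_inv (-6*a*a)) by nra.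
  rewrite ?ci_2, ?ci_opp in *.
  cpush.
  unfold cscal in *. simpl fst in *; simpl snd in *.
  destruct q as [Q S], p as [P0 P1]; simpl fst in *; simpl snd in *.
  set (j := ci w) in *.
  assert (HS : S = (-(1 + j) * Q)%C).
  { apply (f_equal fst) in H1; simpl in H1. cpush.
    replace S with (-(-(1) * Q + -(1) * S) - Q)%C by ring. rewrite H1; ring. }
  assert (HP : P0 = ((1 + j) * P1)%C).
  { apply (f_equal snd) in H2; simpl in H2. cpush. apply lemP in H2. rewrite H2. ring. }
  subst S P0. unfold j in *. clear j. rewrite !conj_m, !conj_p in *. set (j := ci w) in *.
  assert (Hj : j <> 0%C) by (apply ci_neq0; lra).
  assert (HA : RtoC a <> 0%C) by (intro HH; apply Ha; apply (f_equal fst) in HH; exact HH).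
  match goal with |- context [Re ?E] => assert (HE : E = (Cconj P1 * Q * (Q * Cconj Q) * (-(24) - 4*j + 4/3*(j*j)))%C) end.
  { field. intro HH; apply Ha; apply (f_equal fst) in HH; exact HH. }
  rewrite HE.
  assert (Hn : (Cconj P1 * Q = / (- (2) * j))%C).
  { assert (Hn' : (- (2) * j * (Cconj P1 * Q) = 1)%C) by (rewrite <- H3; ring).
    replace (Cconj P1 * Q)%C with (/(-(2)*j) * (-(2)*j*(Cconj P1*Q)))%C.
    - rewrite Hn'; ring.
    - field. intro HH; apply (f_equal snd) in HH; unfold j, ci in HH; simpl in HH; lra. }
  rewrite Hn. clear - Hw Hn. apply (final_sub w Q P1); auto.
Qed.

Lemma final_super (w : R) (Q P1 : C) : 0 < w -> (Cconj P1 * Q = / (- (2) * ci w))%C ->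
  / (2 * w) * Re (/ (- (2) * ci w) * (Q * Cconj Q) * (2 * (3 + ci w)))%C < 0.
Proof.
  intros Hw Hn.
  destruct Q as [x y].
  assert (Hq : 0 < x*x + y*y).
  { destruct (Req_dec (x*x+y*y) 0) as [H0|H0]; [|nra].
    assert (x = 0) by nra. assert (y = 0) by nra. subst x y.
    exfalso. apply (f_equal snd) in Hn. unfold Cconj, Cmult, Cinv, ci, RtoC, Copp in Hn; simpl in Hn.
    field_simplify in Hn; [|nra]. apply (f_equal (fun t => t * w)) in Hn.
    field_simplify in Hn; lra. }
  replace (Re _) with (- (x*x+y*y)).
  - assert (0 < / (2*w)) by (apply Rinv_0_lt_compat; lra). nra.
  - unfold Cconj, Cmult, Cinv, ci, RtoC, Copp, Cplus, Cminus, Cdiv, Re; simpl. field. lra.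
Qed.


Lemma lyap_super (P w : R) : 0 < w -> w*w = P - 1 -> forall q p,
  hopf_eigvecs (vf P 1) (0,0) w q p -> lyap1 (vf P 1) (0,0) w q p < 0.
Proof.
  intros Hw Hwa q p [H1 [H2 H3]].
  unfold lyap1, Ainv, Rinv2, Bform, Cform, sum2, cv in *.
  unfold hopf_eigvecs, Aapp, ATapp, cdot, sum2, cv in *.
  rewrite ?jac00, ?jac01, ?jac10, ?jac11 in *.
  rewrite (csolve_eq _ _ _ _ _ (w*w)).
  2:{ nra. }
  2:{ unfold Cminus, Cmult, Cplus, Copp, RtoC, ci; simpl. apply injective_projections; simpl. all: nra. }
  rewrite (csolve_eq _ _ _ _ _ (-3*w*w)).
  2:{ nra. }
  2:{ unfold Cminus, Cmult, Cplus, Copp, RtoC, ci; simpl. apply injective_projections; simpl. all: nra. }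
  unfold jac in *. drw. simpl fst in *; simpl snd in *.
  rewrite (RtoC_inv (w*w)) by nra. rewrite (RtoC_inv (-3*w*w)) by nra.
  rewrite ?ci_2, ?ci_opp in *.
  cpush.
  unfold cscal in *. simpl fst in *; simpl snd in *.
  destruct q as [Q S], p as [P0 P1]; simpl fst in *; simpl snd in *.
  set (j := ci w) in *.
  assert (HS : S = (-(1 + j) * Q)%C).
  { apply (f_equal fst) in H1; simpl in H1. cpush.
    replace S with (-(-(1) * Q + -(1) * S) - Q)%C by ring. rewrite H1; ring. }
  assert (HP : P0 = ((1 + j) * P1)%C).
  { apply (f_equal snd) in H2; simpl in H2. cpush. apply lemP in H2. rewrite H2. ring. }
  subst S P0. unfold j in *. clear j. rewrite !conj_m, !conj_p in *. set (j := ci w) in *.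
  assert (Hj : j <> 0%C) by (apply ci_neq0; lra).
  match goal with |- context [Re ?E] => assert (HE : E = (Cconj P1 * Q * (Q * Cconj Q) * (2 * (3 + j)))%C) end.
  { field. intro HH; apply (f_equal fst) in HH; simpl in HH; lra. }
  rewrite HE.
  assert (Hn : (Cconj P1 * Q = / (- (2) * j))%C).
  { assert (Hn' : (- (2) * j * (Cconj P1 * Q) = 1)%C) by (rewrite <- H3; ring).
    replace (Cconj P1 * Q)%C with (/(-(2)*j) * (-(2)*j*(Cconj P1*Q)))%C.
    - rewrite Hn'; ring.
    - field. intro HH; apply (f_equal snd) in HH; unfold j, ci in HH; simpl in HH; lra. }
  rewrite Hn. clear - Hw Hn. apply (final_super w Q P1); auto.
Qed.


Lemma charpoly_vf p r x y l : charpoly (vf p r) (x, y) l =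
  (l*l + RtoC (1 - (r - x^2)) * l + RtoC ((p - 2*x*y) - (r - x^2)))%C.
Proof.
  unfold charpoly. rewrite jac00, jac01, jac10, jac11. simpl fst; simpl snd.
  destruct l as [u v]. unfold Cminus, Cmult, Cplus, Copp, RtoC.
  apply injective_projections; simpl; ring.
Qed.

Lemma quad_iff b c w : (forall l, (l*l + RtoC b*l + RtoC c)%C = ((l - ci w)*(l + ci w))%C) <-> (b = 0 /\ c = w*w).
Proof.
  split.
  - intro H. pose proof (H (RtoC 0)) as H0. pose proof (H (RtoC 1)) as H1.
    apply (f_equal fst) in H0. apply (f_equal fst) in H1.
    unfold Cminus, Cmult, Cplus, Copp, RtoC, ci in H0, H1; simpl in H0, H1.
    split; nra.
  - intros [Hb Hc] [u v]. subst. unfold Cminus, Cmult, Cplus, Copp, RtoC, ci.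
    apply injective_projections; simpl; ring.
Qed.

Lemma imag_iff p r x y w : (forall l, charpoly (vf p r) (x, y) l = ((l - ci w)*(l + ci w))%C)
   <-> (1 - (r - x^2) = 0 /\ (p - 2*x*y) - (r - x^2) = w*w).
Proof.
  split; intro H.
  - apply quad_iff. intro l. rewrite <- charpoly_vf. apply H.
  - intro l. rewrite charpoly_vf. apply quad_iff; auto.
Qed.

Lemma sq_sqrt x : 0 <= x -> sqrt x * sqrt x = x.
Proof. apply sqrt_sqrt. Qed.

Theorem mainTheorem3 :
  (forall p r x y, vf p r (- x, - y) = (- fst (vf p r (x, y)), - snd (vf p r (x, y)))) /\
  (equilibrium (vf 1 1) (0, 0) /\ double_zero_eigenvalue (vf 1 1) (0, 0)
     /\ jac_nonzero (vf 1 1) (0, 0)) /\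
  (forall p r, 0 < p -> 0 < r ->
     (is_eigenvalue (vf p r) (0, 0) (RtoC 0) <-> r = p) /\
     (forall z, equilibrium (vf p r) z <->
        z = (0, 0) \/
        (p < r /\ (z = (sqrt (r - p), - sqrt (r - p)) \/ z = (- sqrt (r - p), sqrt (r - p)))))) /\
  (forall p r, 0 < p -> 0 < r ->
     ((exists w, imag_pair (vf p r) (0, 0) w) <-> (r = 1 /\ 1 < p))) /\
  (forall p, 1 < p ->
     hopf_supercritical (vf p 1) (0, 0) /\
     Derive (fun r => trJ (vf p r) (0, 0)) 1 <> 0) /\
  (forall p r, 0 < p -> p < r -> forall s, (s = 1 \/ s = -1) ->
     ((exists w, imag_pair (vf p r) (s * sqrt (r - p), - (s * sqrt (r - p))) w) <-> p = 1)) /\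
  (forall r, 1 < r -> forall s, (s = 1 \/ s = -1) ->
     hopf_subcritical (vf 1 r) (s * sqrt (r - 1), - (s * sqrt (r - 1))) /\
     Derive (fun p => trJ (vf p r) (s * sqrt (r - p), - (s * sqrt (r - p)))) 1 <> 0).
Proof.
  split; [|split; [|split; [|split; [|split; [|split]]]]].
  - intros p r x y. unfold vf; simpl. apply injective_projections; simpl; ring.
  - split; [|split].
    + unfold equilibrium, vf; simpl. apply injective_projections; simpl; ring.
    + intro l. rewrite charpoly_vf. destruct l as [u v].
      unfold Cminus, Cmult, Cplus, Copp, RtoC. apply injective_projections; simpl; ring.
    + exists 0%nat, 0%nat. split; [lia|split; [lia|]]. rewrite jac00. lra.
  - intros p r Hp Hr. split.
    + unfold is_eigenvalue. rewrite charpoly_vf. split.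
      * intro H. apply (f_equal fst) in H. unfold Cminus, Cmult, Cplus, Copp, RtoC in H; simpl in H. lra.
      * intro H. subst. unfold Cminus, Cmult, Cplus, Copp, RtoC. apply injective_projections; simpl; ring.
    + intros [x y]. unfold equilibrium, vf; simpl. split.
      * intro H. injection H as H1 H2.
        assert (Hy : y = - x) by lra. subst y.
        assert (Hx : x * (x*x - (r - p)) = 0) by (simpl in H2; nra).
        destruct (Req_dec x 0) as [H0|Hne].
        -- left. subst x. apply injective_projections; simpl; ring.
        -- right. assert (H0 : x*x - (r - p) = 0).
           { destruct (Rmult_integral _ _ Hx); [contradiction|auto]. }
           assert (Hpr : p < r).
           { assert (0 < x*x) by (apply Rsqr_pos_lt; auto). lra. }
           split; auto.
           assert (Hs : sqrt (r-p) * sqrt (r-p) = r - p) by (apply sqrt_sqrt; lra).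
           assert (Hf : (x - sqrt (r-p)) * (x + sqrt (r-p)) = 0) by nra.
           destruct (Rmult_integral _ _ Hf) as [Hf1|Hf1].
           ++ left. assert (x = sqrt (r-p)) by lra. subst x. reflexivity.
           ++ right. assert (x = - sqrt (r-p)) by lra. subst x. apply injective_projections; simpl; ring.
      * intros [H|[Hpr [H|H]]]; injection H as H1 H2; subst x y;
          try (apply injective_projections; simpl; ring);
          assert (Hs : sqrt (r-p) * sqrt (r-p) = r - p) by (apply sqrt_sqrt; lra);
          apply injective_projections; simpl; nsatz.
  - intros p r Hp Hr. split.
    + intros [w [Hw H]]. apply imag_iff in H. simpl in H. destruct H as [H1 H2]. split; nra.
    + intros [H1 H2]. subst r. exists (sqrt (p - 1)). split.
      * apply sqrt_lt_R0. lra.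
      * apply imag_iff. rewrite sq_sqrt by lra. simpl. split; ring.
  - intros p Hp. split.
    + exists (sqrt (p - 1)). split; [split|].
      * apply sqrt_lt_R0. lra.
      * apply imag_iff. rewrite sq_sqrt by lra. simpl. split; ring.
      * intros q pp H. apply (lyap_super p (sqrt (p-1))); auto.
        -- apply sqrt_lt_R0. lra.
        -- apply sq_sqrt; lra.
    + replace (fun r => trJ (vf p r) (0, 0)) with (fun r => -1 + (r - 0 ^ 2)).
      * rewrite (is_derive_unique _ _ 1). lra. auto_derive; auto; ring.
      * apply functional_extensionality; intro r. unfold trJ. rewrite jac00, jac11. reflexivity.
  - intros p r Hp Hpr s Hs.
    assert (Hs2 : s * s = 1) by (destruct Hs; subst; ring).
    assert (Hq : sqrt (r-p) * sqrt (r-p) = r - p) by (apply sqrt_sqrt; lra).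
    split.
    + intros [w [Hw H]]. apply imag_iff in H. destruct H as [H1 H2].
      simpl in H1. nra.
    + intro H1. subst p. exists (sqrt (2 * (r - 1))). split.
      * apply sqrt_lt_R0. lra.
      * apply imag_iff. rewrite sq_sqrt by lra. simpl. split; nsatz.
  - intros r Hr s Hs.
    assert (Hs2 : s * s = 1) by (destruct Hs; subst; ring).
    split.
    + set (a := s * sqrt (r - 1)).
      assert (Ha2 : a * a = r - 1).
      { unfold a. replace (s * sqrt (r-1) * (s * sqrt (r-1))) with ((s*s) * (sqrt (r-1) * sqrt (r-1))) by ring.
        rewrite Hs2, sq_sqrt by lra. ring. }
      assert (Hra : r = 1 + a ^ 2) by (simpl; lra).
      clearbody a. subst r.
      assert (Hapos : 0 < 2 * a * a) by lra.
      exists (sqrt (2 * a * a)). split; [split|].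
      * apply sqrt_lt_R0. lra.
      * apply imag_iff. rewrite sq_sqrt by lra. simpl. split; ring.
      * intros q pp H. apply (lyap_sub a (sqrt (2*a*a))); auto.
        -- apply sqrt_lt_R0. lra.
        -- apply sq_sqrt; lra.
    + rewrite (is_derive_unique _ _ 1). lra.
      apply (is_derive_ext_loc (fun p => p - 1)).
      * assert (He : 0 < r - 1) by lra.
        exists (mkposreal _ He). intros t Ht.
        unfold ball in Ht; simpl in Ht; unfold AbsRing_ball, abs, minus, plus, opp in Ht; simpl in Ht.
        apply Rabs_def2 in Ht. destruct Ht as [Ht1 Ht2].
        unfold trJ. rewrite jac00, jac11. simpl fst.
        assert (Hq : sqrt (r-t) * sqrt (r-t) = r - t) by (apply sqrt_sqrt; lra).
        assert (E : (s*sqrt(r-t))^2 = r - t).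
        { replace ((s*sqrt(r-t))^2) with ((s*s)*(sqrt(r-t)*sqrt(r-t))) by ring. rewrite Hs2, Hq. ring. }
        rewrite E. lra.
      * auto_derive; auto; ring.
Qed.
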